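(* Let $X$ be any set and let $X_d$ denote $X$ with the discrete topology. Then: (1) $2^{X_d}_{SL}$ is an Alexandroff $T_0$-space. (2) For every $C\in 2^X$, the minimal open neighbourhood of $C$ in $2^{X_d}_{SL}$ is $\bigcap_{c\in C}L_{\{c\}}=\{D\in 2^X \mid C\subseteq D\}$. (3) The partial order on $2^X$ associated to the Alexandroff $T_0$-space $2^{X_d}_{SL}$ is given by $C\geq D$ if and only if $C\subseteq D$. (4) The identity map $I:2^{X_d}_{SL}\to 2^{X_d}_L$ is continuous, and its inverse $I^{-1}:2^{X_d}_L\to 2^{X_d}_{SL}$ is continuous at a point $C\in 2^X$ if and only if $C$ is a finite set. (5) The Alexandroff $T_0$-topology on $2^X$ associated to the opposite partial order (i.e. $C\geq D$ iff $D\subseteq C$) is exactly the upper semifinite topology, so the resulting space is $2^{X_d}_U$.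
   Context: $2^X$ denotes the set of all non-empty subsets of $X$ (all of which are closed in the discrete space $X_d$). For $U\subseteq X$ put $L_U=\{F\subseteq X\mid F\neq\emptyset,\ F\cap U\neq\emptyset\}$. The lower semifinite topology on $2^X$ is generated by the subbase $\{L_U\mid U\subseteq X\}$; the space is denoted $2^{X_d}_L$. The strong lower semifinite topology on $2^X$ is the topology generated by the family $SL=\{\bigcap_{i\in I}L_{U_i}\mid I \text{ any index set with } \mathrm{Card}(I)\le\mathrm{Card}(X),\ U_i\subseteq X\}$; the space is denoted $2^{X_d}_{SL}$. The upper semifinite topology on $2^X$ is the topology with base $\{\{F\in 2^X\mid F\subseteq U\}\mid U\subseteq X\}$; the space is denoted $2^{X_d}_U$. An Alexandroff space is a topological space in which arbitrary intersections of open sets are open; each point $x$ then has a minimal open neighbourhood $U_x$. For an Alexandroff $T_0$-space the associated partial order is $y\le x$ iff $y\in U_x$ (so $U_x=\{y\mid y\le x\}$); conversely a partial order determines the Alexandroff $T_0$-topology whose open sets are the down-sets. *)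

(* Defs.v *)
From mathcomp Require Import all_boot.
From mathcomp Require Import boolp classical_sets cardinality.
Unset Printing Implicit Defensive.
Local Open Scope classical_set_scope.

Definition is_topology {T : Type} (tau : set (set T)) : Prop :=
  [/\ tau setT,
      (forall F : set (set T), F `<=` tau -> tau (\bigcup_(A in F) A)) &
      (forall A B, tau A -> tau B -> tau (A `&` B))].

Definition generated {T : Type} (S : set (set T)) : set (set T) :=
  fun O => forall tau, is_topology tau -> S `<=` tau -> tau O.

Definition alexandroff {T : Type} (tau : set (set T)) : Prop :=
  forall F : set (set T), F `<=` tau -> tau (\bigcap_(A in F) A).

Definition T0 {T : Type} (tau : set (set T)) : Prop :=
  forall x y : T, x <> y ->
    exists O, tau O /\ ((O x /\ ~ O y) \/ (O y /\ ~ O x)).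

Definition min_open_nbhd {T : Type} (tau : set (set T)) (x : T) (U : set T) : Prop :=
  [/\ tau U, U x & forall V, tau V -> V x -> U `<=` V].

Definition assoc_le {T : Type} (tau : set (set T)) (y x : T) : Prop :=
  forall V, tau V -> V x -> V y.

(** Alexandroff topology of an order: the down-sets. *)
Definition downsets {T : Type} (le : T -> T -> Prop) : set (set T) :=
  fun O => forall x y, O x -> le y x -> O y.

Definition continuous_map {T1 T2 : Type} (tau1 : set (set T1)) (tau2 : set (set T2))
  (f : T1 -> T2) : Prop :=
  forall V, tau2 V -> tau1 (f @^-1` V).

Definition continuous_at_pt {T1 T2 : Type} (tau1 : set (set T1)) (tau2 : set (set T2))
  (f : T1 -> T2) (x : T1) : Prop :=
  forall V, tau2 V -> V (f x) ->
    exists U, [/\ tau1 U, U x & forall y, U y -> V (f y)].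

(** The hyperspace 2^X of non-empty subsets of X. *)
Definition hyp (X : Type) : Type := {F : set X | F !=set0}.

Definition hval {X : Type} (F : hyp X) : set X := proj1_sig F.

Definition Lset {X : Type} (U : set X) : set (hyp X) :=
  [set F | hval F `&` U !=set0].

Definition lower_topology (X : Type) : set (set (hyp X)) :=
  generated [set O | exists U : set X, O = Lset U].

(** The family SL: intersections of at most Card(X) many L_U. *)
Definition SL_family (X : Type) : set (set (hyp X)) :=
  [set O | exists (I : Type) (f : I -> X), injective f /\
             exists U : I -> set X, O = \bigcap_(i in [set: I]) Lset (U i)].

Definition strong_lower_topology (X : Type) : set (set (hyp X)) :=
  generated (SL_family X).

Definition upper_topology (X : Type) : set (set (hyp X)) :=
  generated [set O | exists U : set X, O = [set F | hval F `<=` U]].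

(* Main.v *)
Require Import Defs.
From mathcomp Require Import all_boot.
From mathcomp Require Import boolp classical_sets cardinality.
From mathcomp Require Import finmap.
Local Open Scope classical_set_scope.

Section Aux.
Variable T : Type.

Lemma gen_top (S : set (set T)) : is_topology (generated S).
Proof.
split.
- by move=> tau [].
- move=> F FS tau htau Stau; case: (htau) => _ hU _; apply: hU => A FA.
  exact: FS.
- move=> A B hA hB tau htau Stau; case: (htau) => _ _ hI.
  by apply: hI; [apply: hA|apply: hB].
Qed.

Lemma gen_sub (S : set (set T)) : S `<=` generated S.
Proof. by move=> A SA tau _ St; apply: St. Qed.

Lemma gen_min (S tau : set (set T)) : is_topology tau -> S `<=` tau ->
  generated S `<=` tau.
Proof. by move=> ht St O hO; apply: hO. Qed.

Lemma gen_union (S : set (set T)) (O : set T) (B : T -> set T) :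
  (forall x, O x -> S (B x) /\ B x x /\ B x `<=` O) -> generated S O.
Proof.
move=> hB.
have -> : O = \bigcup_(A in [set A | exists2 x, O x & A = B x]) A.
  apply/seteqP; split => x.
    move=> Ox; exists (B x); first by exists x.
    by case: (hB x Ox) => _ [].
  case=> A [y Oy ->] Byx; by case: (hB y Oy) => _ [_]; apply.
case: (gen_top S) => _ hU _; apply: hU => A [y Oy ->].
by apply: gen_sub; case: (hB y Oy).
Qed.

End Aux.

Section Main.
Variable X : Type.

Lemma hval_inj (C D : hyp X) : hval C = hval D -> C = D.
Proof.
case: C D => [c pc] [d pd] /= e; subst; congr exist; exact: Prop_irrelevance.
Qed.

Definition up : set (set (hyp X)) :=
  fun O => forall C D, O C -> hval C `<=` hval D -> O D.

Definition upc (C : hyp X) : set (hyp X) := [set D | hval C `<=` hval D].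

Lemma up_top : is_topology up.
Proof.
split.
- by [].
- move=> F FS C D [A FA hAZ] CD; exists A => //; exact: (FS A FA C D).
- by move=> A B hA hB C D [hAZ hBZ] CD; split; [apply: (hA C)|apply: (hB C)].
Qed.

Lemma up_alex F : F `<=` up -> up (\bigcap_(A in F) A).
Proof. by move=> FS C D hC CD A FA; apply: (FS A FA C) => //; apply: hC. Qed.

Lemma upc_up C : up (upc C).
Proof. by move=> D E; rewrite /upc /=; move=> h1 h2; apply: subset_trans h2. Qed.

Lemma Lset_up U : up (Lset U).
Proof. by move=> C D [x [Cx Ux]] CD; exists x; split => //; apply: CD. Qed.

Lemma upc_SL C : SL_family X (upc C).
Proof.
exists {c : X | hval C c}, (@proj1_sig _ _); split.
  by move=> [a pa] [b pb] /= e; subst; congr exist; exact: Prop_irrelevance.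
exists (fun i => [set proj1_sig i]).
apply/seteqP; split => D.
  move=> CD [c pc] _ /=; exists c; split => //; exact: CD.
move=> h c Cc; have := h (exist _ c Cc) I; case=> x [Dx xe]; rewrite /= in xe; by rewrite -xe.
Qed.

Lemma SL_up O : strong_lower_topology X O <-> up O.
Proof.
split.
  apply: gen_min; first exact: up_top.
  move=> A [I [f [_ [U ->]]]] C D hC CD i _; apply: (Lset_up (U i) C) => //; exact: hC.
move=> hO; apply: (@gen_union _ _ _ upc) => C OC; split; first exact: upc_SL.
by split; [|move=> D; apply: hO].
Qed.

Lemma bigcap_upc C : \bigcap_(c in hval C) Lset [set c] = upc C.
Proof.
apply/seteqP; split => D.
  by move=> h c Cc; case: (h c Cc) => x [Dx xe]; rewrite /= in xe; rewrite -xe.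
by move=> CD c Cc; exists c; split => //; apply: CD.
Qed.

Definition taup : set (set (hyp X)) :=
  fun O => forall C, O C -> exists F : set X,
    [/\ finite_set F, F `<=` hval C & forall D, F `<=` hval D -> O D].

Lemma taup_top : is_topology taup.
Proof.
split.
- move=> Z _; exists set0; split => //; exact: finite_set0.
- move=> F FS Z [A FA hAZ]; case: (FS A FA Z hAZ) => G [fG GC hG].
  by exists G; split => // D GD; exists A => //; apply: hG.
- move=> A B hA hB Z [hAZ hBZ].
  case: (hA Z hAZ) => G [fG GC hG]; case: (hB Z hBZ) => H [fH HC hH].
  exists (G `|` H); split.
  + by rewrite finite_setU.
  + by move=> x [|]; [apply: GC|apply: HC].
  + by move=> D GHD; split; [apply: hG|apply: hH] => x ?; apply: GHD; [left|right].
Qed.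

Lemma lower_taup O : lower_topology X O -> taup O.
Proof.
apply: gen_min; first exact: taup_top.
move=> A [U ->] C [x [Cx Ux]]; exists [set x]; split.
- exact: finite_set1.
- by move=> y ->.
- by move=> D hD; exists x; split => //; apply: hD.
Qed.

Lemma lower_up O : lower_topology X O -> up O.
Proof.
apply: gen_min; first exact: up_top.
by move=> A [U ->]; exact: Lset_up.
Qed.

Definition upA (A : set X) : set (hyp X) := [set D | A `<=` hval D].

Lemma lower_upA_seq (s : seq {classic X}) :
  lower_topology X (upA [set x | x \in s]).
Proof.
elim: s => [|a s IH].
  have -> : upA [set x : {classic X} | x \in [::]] = setT.
    by apply/seteqP; split => // D _ x.
  by case: (@gen_top (hyp X) [set O | exists U : set X, O = Lset U]).
have -> : upA [set x : {classic X} | x \in a :: s] =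
          Lset [set a] `&` upA [set x : {classic X} | x \in s].
  apply/seteqP; split => D.
    move=> h; split.
      by exists a; split => //; apply: h; rewrite /= in_cons eqxx.
    by move=> x /= xs; apply: h; rewrite /= in_cons xs orbT.
  case=> [[y [Dy ye]] h] x /=; rewrite /= in ye; subst y; rewrite in_cons => /orP [/eqP ->//|xs].
  exact: h.
case: (@gen_top (hyp X) [set O | exists U : set X, O = Lset U]) => _ _ hI.
apply: hI => //; apply: gen_sub; by exists [set a].
Qed.

Lemma lower_upA (A : set X) : finite_set A -> lower_topology X (upA A).
Proof.
move=> fA; have := @finite_fsetP {classic X} A.
case=> h _; case: (h fA) => Y ->.
have -> : upA [set` Y] = upA [set x : {classic X} | x \in finmap.enum_fset Y].
  by [].
exact: lower_upA_seq.
Qed.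

Definition downs : set (set (hyp X)) :=
  downsets (fun D C : hyp X => hval D `<=` hval C).

Lemma downs_top : is_topology downs.
Proof.
split.
- by [].
- move=> F FS C D [A FA hAZ] DC; exists A => //; exact: (FS A FA C D).
- by move=> A B hA hB C D [hAZ hBZ] DC; split; [apply: (hA C)|apply: (hB C)].
Qed.

End Main.
Arguments upc {X}. Arguments upA {X}. Arguments upc_up {X}. Arguments SL_up {X}. Arguments hval_inj {X}. Arguments lower_upA {X}. Arguments lower_taup {X}. Arguments lower_up {X}.

Theorem mainTheorem3 (X : Type) :
  (* (1) *)
  (is_topology (strong_lower_topology X) /\
   alexandroff (strong_lower_topology X) /\ T0 (strong_lower_topology X)) /\
  (* (2) *)
  (forall C : hyp X,
     min_open_nbhd (strong_lower_topology X) C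
       (\bigcap_(c in hval C) Lset [set c]) /\
     \bigcap_(c in hval C) Lset [set c] = [set D : hyp X | hval C `<=` hval D]) /\
  (* (3) C >= D iff C is a subset of D *)
  (forall C D : hyp X,
     assoc_le (strong_lower_topology X) D C <-> hval C `<=` hval D) /\
  (* (4) *)
  (continuous_map (strong_lower_topology X) (lower_topology X) id /\
   forall C : hyp X,
     continuous_at_pt (lower_topology X) (strong_lower_topology X) id C
       <-> finite_set (hval C)) /\
  (* (5) opposite order: C >= D iff D is a subset of C *)
  downsets (fun D C : hyp X => hval D `<=` hval C) = upper_topology X.
Proof.
split; [split; [|split]|split; [|split; [|split; [split|]]]].
- exact: gen_top.
- move=> F FS; apply/SL_up; apply: up_alex => A FA; apply/SL_up; exact: FS.
- move=> C D CD.
  have [h|h] := pselect (hval C `<=` hval D).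
    have [h'|h'] := pselect (hval D `<=` hval C).
      by exfalso; apply: CD; apply: hval_inj; apply/seteqP; split.
    exists (upc D); split; first by apply/SL_up; apply: upc_up.
    by right; split => //; rewrite /upc /=.
  exists (upc C); split; first by apply/SL_up; apply: upc_up.
  by left; split => //; rewrite /upc /=.
- move=> C; rewrite bigcap_upc; split => //; split.
  + by apply/SL_up; apply: upc_up.
  + by rewrite /upc /=.
  + by move=> V /SL_up hV VC D CD; apply: (hV C).
- move=> C D; split.
    by move=> h; apply: (h (upc C)) => //; apply/SL_up; apply: upc_up.
  by move=> CD V /SL_up hV VC; apply: (hV C).
- by move=> V hV; apply/SL_up; apply: lower_up.
- move=> C; split.
    move=> h.
    have [U [hU UC UV]] := h (upc C) ((SL_up _).2 (upc_up C)) (@subset_refl _ _).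
    case: (lower_taup _ hU _ UC) => F [fF FC hF].
    case: (proj2_sig C) => c0 Cc0.
    have Dne : (F `|` [set c0]) !=set0 by exists c0; right.
    have := UV (exist _ _ Dne) (hF (exist _ _ Dne) (fun x Fx => or_introl Fx)).
    rewrite /upc /= => CD; apply: (sub_finite_set CD).
    by rewrite finite_setU; split => //; exact: finite_set1.
  move=> fC V /SL_up hV VC; exists (upA (hval C)); split.
  + exact: lower_upA.
  + by rewrite /upA /=.
  + by move=> D hD; apply: (hV C).
- apply/funext => O; apply/propext; split.
    move=> hO; apply: (@gen_union _ _ O (fun C : hyp X => [set F | hval F `<=` hval C])).
    move=> C OC; split; first by exists (hval C).
    by split => // D; apply: hO.
  apply: gen_min; first exact: downs_top.
  move=> A [U ->] C D /= CU DC; exact: subset_trans DC CU.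
Qed.
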